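(* Let $M,N\ge 1$ be integers and let $\mathcal{X}=\{\mathrm{x}_1,\dots,\mathrm{x}_M\}$ and $\mathcal{Y}=\{\mathrm{y}_1,\dots,\mathrm{y}_N\}$ be two disjoint finite sets of points. Let $d_{\mathcal{X}}:\mathcal{X}\times\mathcal{X}\to\mathbb{R}^+$ and $d_{\mathcal{Y}}:\mathcal{Y}\times\mathcal{Y}\to\mathbb{R}^+$ be symmetric non-negative distance functions. Let $\mathrm{o}_{\mathcal{X}},\mathrm{o}_{\mathcal{Y}}$ be points (origins) and let $u_{\mathcal{X}}:\mathcal{X}\times\{\mathrm{o}_{\mathcal{X}}\}\to\mathbb{R}^+$ and $u_{\mathcal{Y}}:\mathcal{Y}\times\{\mathrm{o}_{\mathcal{Y}}\}\to\mathbb{R}^+$ be non-negative functions (distances to origin). Assume that each of the sets of values of $d_{\mathcal{X}}$, $d_{\mathcal{Y}}$, $u_{\mathcal{X}}$, $u_{\mathcal{Y}}$ contains at least one non-zero value. Let $f:\mathcal{X}\times\mathcal{Y}\to\mathbb{R}^+$ be a non-negative function which is not identically $0$, and write $p(\mathrm{x},\mathrm{y})=p(\mathrm{y},\mathrm{x})=f(\mathrm{x},\mathrm{y})$ for $\mathrm{x}\in\mathcal{X},\mathrm{y}\in\mathcal{Y}$. Let $\mathrm{o}\notin\mathcal{X}\cup\mathcal{Y}$ be a further (theoretical origin) point and $\mathcal{W}=\mathcal{X}\cup\mathcal{Y}\cup\{\mathrm{o}\}$, which has $S=M+N+1$ elements. Then there exists $\varepsilon>0$ such that the symmetric function $f^{\varepsilon}:\mathcal{W}\times\mathcal{W}\to\mathbb{R}^+$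 defined by $$f^{\varepsilon}(\mathrm{w},\mathrm{w}')=\begin{cases}0 & \text{if } \mathrm{w}=\mathrm{w}',\\ \big(u_{\mathcal{A}}(\mathrm{w},\mathrm{o}_{\mathcal{A}})^2+\varepsilon\big)^{1/2} & \text{if } \mathrm{w}\in\mathcal{A},\ \mathrm{w}'=\mathrm{o}\ \text{(or vice versa)},\ \mathcal{A}\in\{\mathcal{X},\mathcal{Y}\},\\ \big(d_{\mathcal{A}}(\mathrm{w},\mathrm{w}')^2+\varepsilon\big)^{1/2} & \text{if } \mathrm{w}\neq\mathrm{w}',\ \mathrm{w},\mathrm{w}'\in\mathcal{A},\ \mathcal{A}\in\{\mathcal{X},\mathcal{Y}\},\\ \big(p(\mathrm{w},\mathrm{w}')^2+\varepsilon\big)^{1/2} & \text{if } \mathrm{w}\in\mathcal{X},\mathrm{w}'\in\mathcal{Y} \text{ or vice versa},\end{cases}$$ has the property that $\mathcal{W}$ can be embedded into the Euclidean space $\mathbb{R}^{Q}$, $Q=M+N+2$, with respect to $f^{\varepsilon}$; that is, there is a map $\phi:\mathcal{W}\to\mathbb{R}^{Q}$ which is a bijection onto its image such that $\|\phi(\mathrm{w})-\phi(\mathrm{w}')\|_{\mathbb{R}^Q}=f^{\varepsilon}(\mathrm{w},\mathrm{w}')$ for all $\mathrm{w},\mathrm{w}'\in\mathcal{W}$.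
   Context: $\mathbb{R}^+$ denotes the non-negative reals and $\|\cdot\|_{\mathbb{R}^Q}$ the Euclidean norm. A set $\mathcal{V}$ equipped with a symmetric non-negative function $h$ on $\mathcal{V}\times\mathcal{V}$ is said to be embeddable into $\mathbb{R}^Q$ with respect to $h$ if there is a bijection $\phi$ from $\mathcal{V}$ onto a subset of $\mathbb{R}^Q$ with $\|\phi(\mathrm{v})-\phi(\mathrm{v}')\|=h(\mathrm{v},\mathrm{v}')$ for all $\mathrm{v},\mathrm{v}'\in\mathcal{V}$. *)

(* Defs.v *)
From HB Require Import structures.
From mathcomp Require Import all_boot all_order all_algebra.
From mathcomp Require Import reals.
Set Implicit Arguments. Unset Strict Implicit. Unset Printing Implicit Defensive.
Import Order.TTheory GRing.Theory Num.Theory.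
Local Open Scope ring_scope.

(* The point set W = X ∪ Y ∪ {o}: [Some (inl i)] is x_(i+1), [Some (inr j)]
   is y_(j+1), [None] is the theoretical origin o.  The sum type makes X and Y
   disjoint and o outside X ∪ Y. *)
Definition Wpt (M N : nat) := option ('I_M + 'I_N)%type.

Definition eucl_norm (R : realType) (n : nat) (v : 'rV[R]_n) : R :=
  Num.sqrt (\sum_(i < n) v ord0 i ^+ 2).

Definition feps (R : realType) (M N : nat)
  (dX : 'I_M -> 'I_M -> R) (dY : 'I_N -> 'I_N -> R)
  (uX : 'I_M -> R) (uY : 'I_N -> R) (f : 'I_M -> 'I_N -> R) (eps : R)
  (w w' : Wpt M N) : R :=
  match w, w' with
  | None, None => 0
  | Some (inl i), None | None, Some (inl i) => Num.sqrt (uX i ^+ 2 + eps)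
  | Some (inr j), None | None, Some (inr j) => Num.sqrt (uY j ^+ 2 + eps)
  | Some (inl i), Some (inl i') =>
      if i == i' then 0 else Num.sqrt (dX i i' ^+ 2 + eps)
  | Some (inr j), Some (inr j') =>
      if j == j' then 0 else Num.sqrt (dY j j' ^+ 2 + eps)
  | Some (inl i), Some (inr j) | Some (inr j), Some (inl i) =>
      Num.sqrt (f i j ^+ 2 + eps)
  end.

Definition embeddable (R : realType) (V : Type) (Q : nat) (h : V -> V -> R) :=
  exists phi : V -> 'rV[R]_Q,
    injective phi /\ forall v v', eucl_norm (phi v - phi v') = h v v'.

(* Main.v *)
Require Import Defs.
From HB Require Import structures.
From mathcomp Require Import all_boot all_order all_algebra.
From mathcomp Require Import reals ring.
Import Order.TTheory GRing.Theory Num.Theory.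
Local Open Scope ring_scope.


Definition off (R : realType) (n : nat) (K : nat -> nat -> R) (i : nat) : R :=
  \sum_(j < n) (if (j : nat) == i then 0 else `|K i j|).

Arguments off {R}.

Lemma offE (R : realType) n (X : nat -> R) i : (i < n)%N ->
  \sum_(j < n) (if (j : nat) == i then 0 else X j) + X i = \sum_(j < n) X j.
Proof.
move=> hi; rewrite [RHS](bigD1 (Ordinal hi)) //= addrC; congr (_ + _).
rewrite [LHS](bigD1 (Ordinal hi)) //= eqxx add0r.
apply: eq_bigr => j /= hj; case: eqP => // e.
by exfalso; move: hj; apply/negP; rewrite negbK; apply/eqP/val_inj.
Qed.

Lemma chol {R : realType} n : forall (K : nat -> nat -> R),
  (forall i j, K i j = K j i) ->
  (forall i, (i < n)%N -> off n K i < K i i) ->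
  exists V : nat -> nat -> R, forall i j, (i < n)%N -> (j < n)%N ->
    K i j = \sum_(k < n) V i k * V j k.
Proof.
elim: n => [|n IH] K Ks Kd.
  by exists (fun _ _ => 0) => i j.
set a := K 0%N 0%N.
have Ka : off n.+1 K 0 < a by apply: Kd.
have s_lt : \sum_(j < n) `|K 0%N j.+1| < a.
  by move: Ka; rewrite /off big_ord_recl /= add0r.
have a_gt0 : 0 < a.
  by apply: le_lt_trans s_lt; apply: sumr_ge0 => j _.
pose K' := fun i j => K i.+1 j.+1 - K i.+1 0%N * K j.+1 0%N / a.
have K's : forall i j, K' i j = K' j i.
  by move=> i j; rewrite /K' [K i.+1 j.+1]Ks (mulrC (K i.+1 0%N)).
have K'd : forall i, (i < n)%N -> off n K' i < K' i i.
  move=> i hi.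
  have hrow : `|K i.+1 0%N| + off n (fun i j => K i.+1 j.+1) i < K i.+1 i.+1.
    by move: (Kd i.+1 hi); rewrite /off big_ord_recl /=.
  have h1 : off n K' i <= off n (fun i j => K i.+1 j.+1) i +
      \sum_(j < n) (if (j : nat) == i then 0 else `|K i.+1 0%N| * `|K j.+1 0%N| / a).
    rewrite /off -big_split /=; apply: ler_sum => j _.
    case: eqP => _; first by rewrite addr0.
    rewrite /K'; apply: le_trans (ler_normB _ _) _.
    by rewrite !normrM normfV (gtr0_norm a_gt0).
  have h2 : \sum_(j < n) (if (j : nat) == i then 0 else `|K i.+1 0%N| * `|K j.+1 0%N| / a)
      + K i.+1 0%N * K i.+1 0%N / a <= `|K i.+1 0%N|.
    have -> : K i.+1 0%N * K i.+1 0%N / a = `|K i.+1 0%N| * `|K i.+1 0%N| / a.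
      by rewrite -normrM ger0_norm // -expr2 sqr_ge0.
    rewrite (@offE R n (fun j => `|K i.+1 0%N| * `|K j.+1 0%N| / a) i hi).
    rewrite -mulr_suml -mulr_sumr -mulrA ler_piMr //.
    rewrite ler_pdivrMr // mul1r; apply: ltW; apply: le_lt_trans s_lt.
    by rewrite le_eqVlt; apply/orP; left; apply/eqP; apply: eq_bigr => j _; rewrite Ks.
  rewrite /K' /=; move: h1 h2 hrow; set o := off n K' i; set oc := off _ _ i.
  set s := \sum_(j < n) _; set q := K i.+1 0%N * K i.+1 0%N / a.
  move=> h1 h2 h3; rewrite ltrBrDr; apply: le_lt_trans h3.
  apply: le_trans (lerD h1 (lexx q)) _; rewrite -addrA addrC lerD2r addrC.
  by rewrite addrC.
have [V' HV'] := IH K' K's K'd.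
pose V := fun i k => match i, k with
  | 0, 0 => Num.sqrt a | 0, _.+1 => 0
  | i'.+1, 0 => K i 0%N / Num.sqrt a | i'.+1, k'.+1 => V' i' k' end.
exists V => i j hi hj; rewrite big_ord_recl /=.
have sa : Num.sqrt a != 0 by rewrite gt_eqF // sqrtr_gt0.
have saa : Num.sqrt a * Num.sqrt a = a by rewrite -expr2 sqr_sqrtr // ltW.
case: i hi => [|i] hi; case: j hj => [|j] hj /=.
- rewrite saa big1 ?addr0 // => k _; exact: mulr0.
- rewrite big1 ?addr0; [by rewrite mulrC divfK // Ks | by move=> k _; rewrite mul0r].
- rewrite big1 ?addr0; [by rewrite divfK | by move=> k _; rewrite mulr0].
- rewrite [X in _ + X](_ : _ = K' i j); last by rewrite HV'.
  rewrite /K' (_ : K i.+1 0%N / Num.sqrt a * (K j.+1 0%N / Num.sqrt a) = K i.+1 0%N * K j.+1 0%N / a).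
    by rewrite addrC subrK.
  by rewrite mulrACA -invfM saa.
Qed.

Definition cw (R : realType) (M N : nat)
  (dX : 'I_M -> 'I_M -> R) (dY : 'I_N -> 'I_N -> R)
  (uX : 'I_M -> R) (uY : 'I_N -> R) (f : 'I_M -> 'I_N -> R)
  (w w' : Wpt M N) : R :=
  match w, w' with
  | None, None => 0
  | Some (inl i), None | None, Some (inl i) => uX i ^+ 2
  | Some (inr j), None | None, Some (inr j) => uY j ^+ 2
  | Some (inl i), Some (inl i') => dX i i' ^+ 2
  | Some (inr j), Some (inr j') => dY j j' ^+ 2
  | Some (inl i), Some (inr j) | Some (inr j), Some (inl i) => f i j ^+ 2
  end.

Arguments cw {R M N}.

Lemma fepsE (R : realType) (M N : nat) dX dY uX uY f (eps : R) (w w' : Wpt M N) :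
  w != w' -> feps dX dY uX uY f eps w w' = Num.sqrt (cw dX dY uX uY f w w' + eps).
Proof.
case: w => [[i|j]|]; case: w' => [[i'|j']|] //= hne;
  try (case: eqP => [e|//]; exfalso; move: hne; rewrite e eqxx //).
Qed.

Lemma feps0 (R : realType) (M N : nat) dX dY uX uY f (eps : R) (w : Wpt M N) :
  feps dX dY uX uY f eps w w = 0.
Proof. by case: w => [[i|j]|] //=; rewrite eqxx. Qed.

Lemma cw_sym (R : realType) (M N : nat) (dX : 'I_M -> 'I_M -> R) (dY : 'I_N -> 'I_N -> R) uX uY f
  (dX_sym : forall i i', dX i i' = dX i' i)
  (dY_sym : forall j j', dY j j' = dY j' j) (w w' : Wpt M N) :
  cw dX dY uX uY f w w' = cw dX dY uX uY f w' w.
Proof. by case: w => [[i|j]|]; case: w' => [[i'|j']|] //=; first [by rewrite dX_sym | by rewrite dY_sym]. Qed.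

Theorem theorem3 (R : realType) (M N : nat) (hM : (0 < M)%N) (hN : (0 < N)%N)
  (dX : 'I_M -> 'I_M -> R) (dY : 'I_N -> 'I_N -> R)
  (uX : 'I_M -> R) (uY : 'I_N -> R) (f : 'I_M -> 'I_N -> R)
  (dX_sym : forall i i', dX i i' = dX i' i)
  (dY_sym : forall j j', dY j j' = dY j' j)
  (dX_ge0 : forall i i', 0 <= dX i i')
  (dY_ge0 : forall j j', 0 <= dY j j')
  (uX_ge0 : forall i, 0 <= uX i)
  (uY_ge0 : forall j, 0 <= uY j)
  (f_ge0 : forall i j, 0 <= f i j)
  (dX_nz : exists i i', dX i i' != 0)
  (dY_nz : exists j j', dY j j' != 0)
  (uX_nz : exists i, uX i != 0)
  (uY_nz : exists j, uY j != 0)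
  (f_nz : exists i j, f i j != 0) :
  exists eps : R, 0 < eps /\
    embeddable (M + N + 2)%N (feps dX dY uX uY f eps).
Proof.
pose T := option ('I_M + 'I_N)%type.
pose e := enum {: option ('I_M + 'I_N)}.
pose S := size e.
have hS : S = (M + N).+1 by rewrite /S -cardE card_option card_sum !card_ord.
have hSQ : (S <= M + N + 2)%N by rewrite hS addn2.
pose cc := cw dX dY uX uY f.
have cc_ge0 : forall w w', 0 <= cc w w' by move=> [[i|j]|] [[i'|j']|]; rewrite /cc /= ?sqr_ge0.
pose c := fun a b => cc (nth None e a) (nth None e b).
pose tot := \sum_(a < S) \sum_(b < S) c a b.
have tot_ge0 : 0 <= tot by apply: sumr_ge0 => a _; apply: sumr_ge0 => b _; apply: cc_ge0.
pose eps := 2 * (1 + tot).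
have eps_gt0 : 0 < eps by rewrite /eps mulr_gt0 // ltr_pwDl.
pose K := fun a b : nat => if a == b then eps / 2 else - c a b / 2.
have Ks : forall a b, K a b = K b a.
  move=> a b; rewrite /K eq_sym; case: eqP => // _.
  by rewrite /c /cc cw_sym.
have Kd : forall a, (a < S)%N -> off S K a < K a a.
  move=> a ha; rewrite /K eqxx.
  have -> : eps / 2 = 1 + tot.
    by rewrite /eps mulrC mulKf // pnatr_eq0.
  apply: ltr_pwDl => //.
  apply: (@le_trans _ _ (\sum_(b < S) c a b)).
    apply: ler_sum => b _; case: eqP => [_|/eqP hne]; first exact: cc_ge0.
    rewrite eq_sym (negbTE hne) normrM normrN normfV (ger0_norm (cc_ge0 _ _)) ger0_norm //.
    rewrite ler_pdivrMr // ler_peMr ?cc_ge0 //.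
    by rewrite ler1n.
  rewrite /tot [X in _ <= X](bigD1 (Ordinal ha)) //= -[X in X <= _]addr0; apply: lerD; first exact: lexx.
  by apply: sumr_ge0 => a' _; apply: sumr_ge0 => b _; apply: cc_ge0.
have [V HV] := chol S K Ks Kd.
pose phi := fun w : Wpt M N => \row_(k < M + N + 2) (if (k < S)%N then V (index w e) k else 0).
have hidx : forall w : Wpt M N, (index w e < S)%N by move=> w; rewrite index_mem mem_enum.
have hnth : forall w : Wpt M N, nth None e (index w e) = w by move=> w; rewrite nth_index // mem_enum.
have dist : forall w w', eucl_norm (phi w - phi w') =
   Num.sqrt (K (index w e) (index w e) + K (index w' e) (index w' e) - 2 * K (index w e) (index w' e)).
  move=> w w'; rewrite /eucl_norm; congr Num.sqrt.
  set a := index w e; set b := index w' e.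
  rewrite (HV a a (hidx w) (hidx w)) (HV b b (hidx w') (hidx w')) (HV a b (hidx w) (hidx w')).
  rewrite mulr_sumr -big_split -sumrB /=.
  rewrite (big_ord_widen _ (fun k => V a k * V a k + V b k * V b k - 2 * (V a k * V b k)) hSQ).
  rewrite [RHS]big_mkcond /=; apply: eq_bigr => k _; rewrite !mxE.
  case: ifP => _; last by rewrite subr0 expr2 mulr0.
  ring.
have hfe : forall w w', eucl_norm (phi w - phi w') = feps dX dY uX uY f eps w w'.
  move=> w w'; rewrite dist; have [<-|hne] := eqVneq w w'.
    rewrite feps0 /K eqxx (_ : _ - _ = 0) ?sqrtr0 //; ring.
  have hab : index w e != index w' e.
    by apply: contra hne => /eqP h; rewrite -(hnth w) h hnth.
  rewrite /K !eqxx (negbTE hab) fepsE // /c !hnth; congr Num.sqrt.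
  by rewrite /cc; field.
exists eps; split => //; exists phi; split => //.
move=> w w' E; apply/eqP; apply: contraT => hne.
have := hfe w w'; rewrite E subrr fepsE //.
rewrite /eucl_norm big1 => [|k _]; last by rewrite mxE expr2 mulr0.
rewrite sqrtr0 => /esym/eqP; rewrite sqrtr_eq0 leNgt (ltr_wpDl (cc_ge0 w w') eps_gt0) //.
Qed.
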